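(* Let $H$ be a binary tree based graph, let $V_1,\dots,V_q$ be pairwise disjoint sets of variables of $\phi_H$, and for each $1\le i\le q$ let ${\bf S}_i$ be a family of guarded sets of literals, each $S\in{\bf S}_i$ having variable set exactly $V_i$. Then $$\Pr\Big(\bigcap_{i=1}^q\bigcup_{S\in{\bf S}_i}{\bf EC}(S)\Big)=\prod_{i=1}^q\Pr\Big(\bigcup_{S\in{\bf S}_i}{\bf EC}(S)\Big).$$
   Context: Sets of literals never contain a variable together with its negation. A rooted tree is extended if none of its leaves has a sibling. A graph $H$ is a binary tree based graph if it is the edge-disjoint union of extended rooted trees $T_1,\dots,T_m$ with roots $t_1,\dots,t_m$ such that every leaf of some $T_i$ is a leaf of exactly two of the trees, and any two trees have at most one common vertex, which is a leaf of both. $T_i,T_j$ are adjacent if they share a leaf $\ell_{i,j}$; $P_{i,j}$ is the path between $t_i$ and $t_j$ in $T_i\cup T_j$. A pseudoedge is a pair $\{t_i,t_j\}$ with $T_i,T_j$ adjacent. $\phi_H$ is the CNF on variables $V(H)$ with a clause $C_{i,j}$ (positive literals of $V(P_{i,j})$) for each pseudoedge; the non-leaf variables of $C_{i,j}$ are its variables other than $\ell_{i,j}$. A set $S$ of literals is guarded from $C_{i,j}$ if (1) $\ell_{i,j}$ does not occur in $S$, or (2) some non-leaf variable of $C_{i,j}$ occurs positively in $S$, or (3) $\ell_{i,j}$ occurs positively in $S$ and all other variables of $C_{i,j}$ occur negatively in $S$; $S$ is guarded if it is guarded from every clause of $\phi_H$. The positive literal $\ell_{i,j}$ is fixed w.r.t.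 $S$ if $\ell_{i,j}\in S$ and all other variables of $C_{i,j}$ occur negatively in $S$; $Fix(S)$ is the set of fixed literals. ${\bf SAT}(H)$ is the set of satisfying assignments of $\phi_H$; each $S'\in{\bf SAT}(H)$ has probability $(1/2)^{|V(H)\setminus Fix(S')|}$. ${\bf EC}(S)=\{S'\in{\bf SAT}(H):S\subseteq S'\}$. *)

(* Defs.v *)
From HB Require Import structures.
From mathcomp Require Import all_boot all_order all_algebra.
From mathcomp Require Import boolp.
Set Implicit Arguments. Unset Strict Implicit. Unset Printing Implicit Defensive.
Import Order.TTheory GRing.Theory Num.Theory.

Record treeData (V : finType) := TreeData {
  ntrees : nat;
  tverts : 'I_ntrees -> {set V};
  troot  : 'I_ntrees -> V;
  tpar   : 'I_ntrees -> V -> V }.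
Arguments tverts {V} t _.
Arguments troot {V} t _.
Arguments tpar {V} t _ _.

Section BTBG.
Variables (V : finType) (H : treeData V).

Definition tidx := 'I_(ntrees H).

Definition rooted_tree (A : {set V}) (r : V) (p : V -> V) : Prop :=
  [/\ r \in A,
      (forall v, v \in A -> v != r -> p v \in A) &
      (forall v, v \in A -> exists n, iter n p v = r)].

Definition tedges (i : tidx) : {set {set V}} :=
  [set [set v; tpar H i v] | v in tverts H i :\ troot H i].

Definition children (i : tidx) (v : V) : {set V} :=
  [set u in tverts H i | (u != troot H i) && (tpar H i u == v)].

Definition leaf (i : tidx) (v : V) : bool :=
  (v \in tverts H i) && (children i v == set0).

Definition siblings (i : tidx) (u v : V) : bool :=
  [&& u \in tverts H i, v \in tverts H i, u != troot H i,
      v != troot H i, u != v & tpar H i u == tpar H i v].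

Definition extended (i : tidx) : Prop :=
  forall v u, leaf i v -> ~~ siblings i u v.

Definition is_btbg : Prop :=
  [/\ (forall i, rooted_tree (tverts H i) (troot H i) (tpar H i)),
      (forall i, extended i),
      (forall i j, i != j -> [disjoint tedges i & tedges j]),
      (forall i v, leaf i v -> #|[set j | leaf j v]| = 2) &
      (forall i j, i != j -> forall v w,
          v \in tverts H i :&: tverts H j -> w \in tverts H i :&: tverts H j ->
          v = w /\ leaf i v /\ leaf j v) /\
      (forall v, exists i, v \in tverts H i)].

Definition uadj (i j : tidx) : rel V :=
  fun u w => [set u; w] \in tedges i :|: tedges j.

(* v is a vertex of P_{i,j}, the path between t_i and t_j in T_i \cup T_j *)
Definition pvars (i j : tidx) (v : V) : Prop :=
  exists s : seq V,
    [/\ uniq (troot H i :: s), path (uadj i j) (troot H i) s,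
        last (troot H i) s = troot H j & v \in troot H i :: s].

(* pseudoedge / clause C_{i,j}, with l = l_{i,j} the common leaf *)
Definition clause_at (i j : tidx) (l : V) : Prop :=
  i != j /\ leaf i l /\ leaf j l.

(* literals: pairs (variable, sign); true = positive *)
Definition lit := (V * bool)%type.

Definition consistent (S : {set lit}) : Prop :=
  forall v, ~ ((v, true) \in S /\ (v, false) \in S).

Definition occurs (S : {set lit}) (v : V) : Prop :=
  (v, true) \in S \/ (v, false) \in S.

Definition lvars (S : {set lit}) : {set V} :=
  [set v | ((v, true) \in S) || ((v, false) \in S)].

Definition guarded_from (S : {set lit}) (i j : tidx) (l : V) : Prop :=
  ~ occurs S l
  \/ (exists v, [/\ pvars i j v, v <> l & (v, true) \in S])
  \/ ((l, true) \in S /\ forall v, pvars i j v -> v <> l -> (v, false) \in S).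

Definition guarded (S : {set lit}) : Prop :=
  forall i j l, clause_at i j l -> guarded_from S i j l.

Definition fixedP (S : {set lit}) (l : V) : Prop :=
  exists i j, clause_at i j l /\ (l, true) \in S /\
    forall v, pvars i j v -> v <> l -> (v, false) \in S.

Definition Fix (S : {set lit}) : {set V} := [set v | `[< fixedP S v >]].

(* satisfying assignments of phi_H, as complete consistent literal sets *)
Definition SAT (S : {set lit}) : Prop :=
  [/\ consistent S, (forall v, occurs S v) &
      (forall i j l, clause_at i j l -> exists v, pvars i j v /\ (v, true) \in S)].

Definition EC (S S' : {set lit}) : Prop := SAT S' /\ S \subset S'.

Variable R : realFieldType.
Local Open Scope ring_scope.

Definition prob (S' : {set lit}) : R :=
  (2^-1) ^+ #|[set v | v \notin Fix S']|.

Definition Pr (A : {set lit} -> Prop) : R :=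
  \sum_(S' : {set lit} | `[< SAT S' /\ A S' >]) prob S'.

End BTBG.

(* Main.v *)
Require Import Defs.
From HB Require Import structures.
From mathcomp Require Import all_boot all_order all_algebra.
From mathcomp Require Import boolp.
Import Order.TTheory GRing.Theory Num.Theory.
Set Implicit Arguments. Unset Strict Implicit. Unset Printing Implicit Defensive.

Lemma leaf_edge (V : finType) (H : treeData V) (i : tidx H) (v w : V) :
  leaf i v -> [set v; w] \in tedges i -> w = tpar H i v /\ v != troot H i.
Proof.
case/andP=> vi /eqP ch0 /imsetP[x]; rewrite !inE => /andP[xr xi] E.
have vE : v \in [set x; tpar H i x] by rewrite -E !inE eqxx.
have wE : w \in [set x; tpar H i x] by rewrite -E !inE eqxx orbT.
rewrite !inE in vE wE.
case/orP: vE => [/eqP vx|/eqP vp].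
  subst x; split=> //; case/orP: wE => /eqP wE; subst w => //.
  have : tpar H i v \in [set v; v] by rewrite E !inE eqxx orbT.
  by rewrite !inE orbb => /eqP ->.
have : x \in children i v by rewrite inE xi xr -vp eqxx.
by rewrite ch0 inE.
Qed.

Lemma uadj_sym (V : finType) (H : treeData V) (i j : tidx H) u w :
  uadj i j u w = uadj i j w u.
Proof. by rewrite /uadj [[set w; u]]setUC. Qed.

Lemma uadjC (V : finType) (H : treeData V) (i j : tidx H) u w :
  uadj i j u w = uadj j i u w.
Proof. by rewrite /uadj [tedges j :|: _]setUC. Qed.

Lemma edge_verts (V : finType) (H : treeData V) (i : tidx H) u w :
  rooted_tree (tverts H i) (troot H i) (tpar H i) ->
  [set u; w] \in tedges i -> (u \in tverts H i) && (w \in tverts H i).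
Proof.
move=> [_ Hp _] /imsetP[x]; rewrite !inE => /andP[xr xi] E.
have pxi := Hp x xi xr.
have uE : u \in [set x; tpar H i x] by rewrite -E !inE eqxx.
have wE : w \in [set x; tpar H i x] by rewrite -E !inE eqxx orbT.
rewrite !inE in uE wE.
by case/orP: uE => /eqP ->; case/orP: wE => /eqP ->; rewrite ?xi ?pxi.
Qed.

Lemma path_mid (T : eqType) (e : rel T) x s v :
  uniq (x :: s) -> path e x s -> v \in s -> v != last x s ->
  exists u w, [/\ u != w, e u v & e v w].
Proof.
move=> Hu Hp Hv; case/splitPr: Hv Hu Hp => s1 s2.
rewrite last_cat => Hu; rewrite cat_path /= => /and3P[_ e1 p2].
case: s2 Hu p2 => [|w s2] Hu p2; first by rewrite eqxx.
move=> _; exists (last x s1), w; split=> //; last by case/andP: p2.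
apply/eqP=> E; move: Hu; rewrite -cat_cons cat_uniq => /and3P[_ /hasPn H _].
by have := H w; rewrite -E mem_last !inE eqxx orbT => /(_ isT).
Qed.

Lemma core (T : eqType) (e : rel T) x s u (f : T) (P : Prop) :
  uniq (x :: s) -> path e x s -> u \in x :: s -> s != [::] ->
  (u = x -> ~ P) -> (u = last x s -> ~ P) ->
  (forall w, e u w \/ e w u -> w = f /\ P) -> False.
Proof.
move=> Hu Hp Hm Hs Hx Hl Hn.
have [ux|nux] := eqVneq u x.
  case: s Hs Hp Hu Hl Hm => [|y s] // _ /= /andP[exy _] _ _ _.
  by apply: (Hx ux); apply: (proj2 (Hn y _)); left; rewrite ux.
have [ul|nul] := eqVneq u (last x s).
  case/lastP: s Hs Hp Hu Hx Hl Hm ul Hn => [|s y] // _; rewrite rcons_path => /andP[_ ey] _ _ Hl _ ul Hn.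
  apply: (Hl ul); apply: (proj2 (Hn (last x s) _)); right; by rewrite ul last_rcons.
have us : u \in s by move: Hm; rewrite inE (negbTE nux).
have [a [b [ab ea eb]]] := path_mid Hu Hp us nul.
have [Ea _] := Hn a (or_intror ea).
have [Eb _] := Hn b (or_introl eb).
by move: ab; rewrite Ea Eb eqxx.
Qed.

Lemma path_verts (V : finType) (H : treeData V) (i j : tidx H) x s :
  (forall k, rooted_tree (tverts H k) (troot H k) (tpar H k)) ->
  x \in tverts H i :|: tverts H j -> path (uadj i j) x s ->
  forall v, v \in x :: s -> v \in tverts H i :|: tverts H j.
Proof.
move=> Hrt; elim: s x => [|y s IH] x Hx /=.
  by move=> _ v; rewrite inE => /eqP ->.
case/andP=> exy Hp v; rewrite inE => /orP[/eqP -> //|]; apply: IH => //.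
by move: exy; rewrite /uadj inE => /orP[] /(edge_verts (Hrt _)) /andP[_ yk];
  rewrite inE yk ?orbT.
Qed.

Lemma root_in (V : finType) (H : treeData V) (k : tidx H) :
  rooted_tree (tverts H k) (troot H k) (tpar H k) -> troot H k \in tverts H k.
Proof. by case. Qed.

Lemma leaf_in (V : finType) (H : treeData V) (k : tidx H) v : leaf k v -> v \in tverts H k.
Proof. by case/andP. Qed.

Definition Lb (V : finType) (H : treeData V) (v : V) : bool :=
  `[< exists i j : tidx H, clause_at i j v >].

Lemma nonleaf (V : finType) (H : treeData V) (i j : tidx H) l u :
  is_btbg H -> clause_at i j l -> pvars i j u -> u <> l -> ~~ Lb H u.
Proof.
move=> HH [ij [li lj]] [s [Hu Hp Hl Hm]] ul.
have [Hrt _ _ _ [Hsh _]] := HH.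
apply/negP=> /asboolP [k [k' [_ [lk _]]]].
have uij : u \in tverts H i :|: tverts H j.
  apply: (path_verts Hrt _ Hp Hm); by rewrite inE root_in.
have notboth : ~ ((u \in tverts H i) && (u \in tverts H j)).
  move=> uu; apply: ul.
  have lij : l \in tverts H i :&: tverts H j by rewrite inE !leaf_in.
  have uij' : u \in tverts H i :&: tverts H j by rewrite inE.
  by have [] := Hsh i j ij u l uij' lij.
have key : forall a b, ((a == i) && (b == j)) || ((a == j) && (b == i)) ->
    u \in tverts H a -> u \notin tverts H b -> False.
  move=> a b ab ua ub.
  have Eab : tedges i :|: tedges j = tedges a :|: tedges b.
    by case/orP: ab => /andP[/eqP -> /eqP ->] //; rewrite setUC.
  have endp : forall x, (x = troot H i \/ x = troot H j) ->
      x = troot H a \/ x \in tverts H b.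
    move=> x hx; case/orP: ab => /andP[/eqP ea /eqP eb]; subst a b;
      case: hx => ->; by [left | right; apply: root_in].
  have lau : leaf a u.
    have [ka|ka] := eqVneq k a; first by rewrite -ka.
    have uk : u \in tverts H k :&: tverts H a by rewrite inE ua leaf_in.
    by have [_ []] := Hsh k a ka u u uk uk.
  have Hn : forall w, uadj i j u w \/ uadj i j w u ->
      w = tpar H a u /\ u != troot H a.
    move=> w hw; have {hw} : uadj i j u w by case: hw => //; rewrite uadj_sym.
    rewrite /uadj Eab inE => /orP[]; first exact: leaf_edge.
    by move/(edge_verts (Hrt b))=> /andP[ub' _]; rewrite ub' in ub.
  have sn : s != [::].
    apply/eqP=> s0; subst s; move: Hm Hl; rewrite inE /= => /eqP ue Hrij.
    by apply: notboth; rewrite ue root_in // Hrij root_in.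
  apply: (core Hu Hp Hm sn (f := tpar H a u) (P := u != troot H a)) => //.
    move=> ux; have [->|] := endp _ (or_introl ux); first by rewrite eqxx.
    by move=> ub'; rewrite ub' in ub.
  move=> ux; rewrite Hl in ux; have [->|] := endp _ (or_intror ux); first by rewrite eqxx.
  by move=> ub'; rewrite ub' in ub.
move: uij; rewrite inE => /orP[ui|uj].
  apply: (key i j); rewrite ?eqxx //; apply/negP=> uj; apply: notboth; by rewrite ui uj.
apply: (key j i); rewrite ?eqxx ?orbT //; apply/negP=> ui; apply: notboth; by rewrite ui uj.
Qed.

Lemma up_path (V : finType) (A : {set V}) r (p : V -> V) v :
  rooted_tree A r p -> v \in A ->
  exists s, [/\ path (fun a b => [&& b == p a, a \in A & a != r]) v s,
     last v s = r & all (mem A) (v :: s)].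
Proof.
move=> [rA pA reach] vA; have [n hn] := reach v vA.
elim: n v vA hn => [|n IH] v vA hn.
  by exists [::]; rewrite /= vA.
have [vr|vr] := eqVneq v r; first by exists [::]; rewrite /= vA vr.
rewrite iterSr in hn; have [s [ps ls als]] := IH _ (pA v vA vr) hn.
by exists (p v :: s); rewrite /= eqxx vA vr ps ls.
Qed.

Lemma last_rev_belast (T : Type) (x : T) s : last (last x s) (rev (belast x s)) = x.
Proof.
case: s => [|y s] //=; rewrite rev_cons last_rcons //.
Qed.

Lemma mem_rev_belast (T : eqType) (x : T) s y :
  y \in rev (belast x s) -> y \in x :: s.
Proof. by rewrite mem_rev lastI mem_rcons inE => ->; rewrite orbT. Qed.

Lemma pvars_leaf (V : finType) (H : treeData V) (i j : tidx H) l :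
  is_btbg H -> clause_at i j l -> pvars i j l.
Proof.
move=> HH [ij [li lj]]; have [Hrt _ _ _ [Hsh _]] := HH.
have sub : forall k, (k = i \/ k = j) -> subrel
   (fun a b => [&& b == tpar H k a, a \in tverts H k & a != troot H k]) (uadj i j).
  move=> k hk a b /and3P[/eqP -> ak ar]; rewrite /uadj inE.
  have : [set a; tpar H k a] \in tedges k by apply/imsetP; exists a; rewrite // !inE ar.
  by case: hk => <- ->; rewrite ?orbT.
have [si [psi lsi asi]] := up_path (Hrt i) (leaf_in li).
have psi' := sub_path (sub i (or_introl erefl)) psi.
have d1 : path (uadj i j) (troot H i) (rev (belast l si)).
  rewrite -lsi rev_path; apply: sub_path psi' => a b; by rewrite uadj_sym.
have ld1 : last (troot H i) (rev (belast l si)) = l by rewrite -lsi last_rev_belast.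
move: ld1; case/shortenP: d1 => s1 p1 u1 sub1 ld1.
have [sj [psj lsj asj]] := up_path (Hrt j) (leaf_in lj).
have psj' := sub_path (sub j (or_intror erefl)) psj.
move: lsj; case/shortenP: psj' => s2 p2 u2 sub2 ls2.
have in1 : forall y, y \in troot H i :: s1 -> y \in tverts H i.
  move=> y; rewrite inE => /orP[/eqP ->|/sub1 /mem_rev_belast]; first exact: root_in.
  by move/(allP asi).
have in2 : forall y, y \in s2 -> y \in tverts H j.
  by move=> y /sub2 ys; apply: (allP asj); rewrite inE ys orbT.
exists (s1 ++ s2); split.
- have /andP[ln2 us2] := u2.
  rewrite -cat_cons cat_uniq u1 /=; apply/andP; split; last by case/andP: u2.
  apply/hasPn=> y ys2; apply/negP=> ys1.
  have yij : y \in tverts H i :&: tverts H j by rewrite inE in1 // in2.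
  have lij : l \in tverts H i :&: tverts H j by rewrite inE !leaf_in.
  have [yl _] := Hsh i j ij y l yij lij.
  by rewrite -yl ys2 in ln2.
- by rewrite cat_path p1 ld1.
- by rewrite last_cat ld1.
- by rewrite -cat_cons mem_cat -ld1 mem_last.
Qed.

Definition Xc (V : finType) (H : treeData V) (w : {ffun V -> bool}) (i j : tidx H) (l : V) : Prop :=
  exists u, [/\ pvars i j u, u <> l & w u].

Definition Kf (V : finType) (H : treeData V) (w : {ffun V -> bool}) (l : V) : bool :=
  `[< forall i j : tidx H, clause_at i j l -> Xc w i j l >].

Definition Phi (V : finType) (H : treeData V) (w : {ffun V -> bool}) : {ffun V -> bool} :=
  [ffun v => if Lb H v then w v || ~~ Kf H w v else w v].

Definition asg (V : finType) (w : {ffun V -> bool}) : {set lit V} := [set x | w x.1 == x.2].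
Definition unasg (V : finType) (S : {set lit V}) : {ffun V -> bool} := [ffun v => (v, true) \in S].

Lemma in_asg (V : finType) (w : {ffun V -> bool}) v b : ((v, b) \in asg w) = (w v == b).
Proof. by rewrite inE. Qed.

Lemma Xc_agree (V : finType) (H : treeData V) (w1 w2 : {ffun V -> bool}) (i j : tidx H) l :
  is_btbg H -> clause_at i j l -> (forall v, ~~ Lb H v -> w1 v = w2 v) ->
  Xc w1 i j l -> Xc w2 i j l.
Proof.
move=> HH c ag [u [pu ul wu]]; exists u; split=> //.
by rewrite -ag // (nonleaf HH c pu ul).
Qed.

Lemma K_agree (V : finType) (H : treeData V) (w1 w2 : {ffun V -> bool}) l :
  is_btbg H -> (forall v, ~~ Lb H v -> w1 v = w2 v) -> Kf H w1 l = Kf H w2 l.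
Proof.
move=> HH ag; apply: asbool_equiv_eq; split=> K i j c.
  exact: (Xc_agree HH c ag (K i j c)).
by apply: (Xc_agree HH c _ (K i j c)) => v /ag ->.
Qed.

Lemma Phi_nl (V : finType) (H : treeData V) (w : {ffun V -> bool}) v : ~~ Lb H v -> Phi H w v = w v.
Proof. by move=> nl; rewrite ffunE (negbTE nl). Qed.

Lemma notK (V : finType) (H : treeData V) (w : {ffun V -> bool}) l :
  ~~ Kf H w l -> exists i j : tidx H, clause_at i j l /\ ~ Xc w i j l.
Proof.
move/asboolPn=> nK; apply: contrapT => nE; apply: nK => i j c.
apply: contrapT => nX; apply: nE; by exists i, j.
Qed.

Lemma SAT_asg (V : finType) (H : treeData V) (w : {ffun V -> bool}) :
  SAT H (asg w) <-> (forall (i j : tidx H) l, clause_at i j l -> exists v, pvars i j v /\ w v).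
Proof.
split=> [[_ _ C] i j l c|C]; first by have [v [pv]] := C i j l c; rewrite in_asg => /eqP; exists v.
split.
- by move=> v []; rewrite !in_asg => /eqP -> /eqP.
- by move=> v; rewrite /occurs !in_asg; case: (w v); [left|right].
- by move=> i j l c; have [v [pv wv]] := C i j l c; exists v; rewrite in_asg wv.
Qed.

Lemma SAT_nK (V : finType) (H : treeData V) (w : {ffun V -> bool}) l :
  SAT H (asg w) -> ~~ Kf H w l -> w l.
Proof.
move=> /SAT_asg S /notK [i [j [c nX]]]; have [v [pv wv]] := S i j l c.
have [vl|vl] := eqVneq v l; first by rewrite -vl.
by exfalso; apply: nX; exists v; split=> //; apply/eqP.
Qed.

Lemma Lb_K (V : finType) (H : treeData V) (w : {ffun V -> bool}) l : ~~ Kf H w l -> Lb H l.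
Proof. by move/notK=> [i [j [c _]]]; apply/asboolP; exists i, j. Qed.

Lemma SAT_Phi (V : finType) (H : treeData V) (w : {ffun V -> bool}) : is_btbg H -> SAT H (asg (Phi H w)).
Proof.
move=> HH; apply/SAT_asg => i j l c.
have Ll : Lb H l by apply/asboolP; exists i, j.
case Pl : (Phi H w l); first by exists l; split=> //; apply: pvars_leaf.
move/negbT: Pl; rewrite ffunE Ll negb_or negbK => /andP[_ /asboolP K].
have [u [pu ul wu]] := K i j c; exists u; split=> //.
by rewrite Phi_nl // (nonleaf HH c pu ul).
Qed.

Lemma unasg_asg (V : finType) (w : {ffun V -> bool}) : unasg (asg w) = w.
Proof. by apply/ffunP=> v; rewrite ffunE in_asg eqb_id. Qed.

Lemma asg_unasg (V : finType) (H : treeData V) S : SAT H S -> asg (unasg S) = S.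
Proof.
case=> cS oS _; apply/setP=> [[v b]]; rewrite in_asg ffunE.
case: b; first by rewrite eqb_id.
have := cS v; case: (oS v) => h; rewrite h ?eqxx.
  by case: ((v, false) \in S) => // nh; exfalso; apply: nh.
by case: ((v, true) \in S) => // nh; exfalso; apply: nh.
Qed.

Lemma Fix_asg (V : finType) (H : treeData V) (w : {ffun V -> bool}) v :
  (v \in Fix H (asg w)) = w v && ~~ Kf H w v.
Proof.
rewrite inE; apply/asboolP/andP.
  move=> [i [j [c [wv hall]]]]; rewrite in_asg in wv; split; first by move/eqP: wv.
  apply/asboolPn=> K; have [u [pu uv wu]] := K i j c.
  by move: (hall u pu uv); rewrite in_asg wu.
move=> [wv /notK [i [j [c nX]]]]; exists i, j; split=> //; split; first by rewrite in_asg wv.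
move=> u pu uv; rewrite in_asg; apply/eqP; apply/negbTE/negP => wu.
by apply: nX; exists u.
Qed.

Lemma Phi_fiber (V : finType) (H : treeData V) (w w' : {ffun V -> bool}) :
  is_btbg H -> SAT H (asg w) ->
  (Phi H w' == w) = [forall v, (v \notin Fix H (asg w)) ==> (w' v == w v)].
Proof.
move=> HH Sw; apply/eqP/forallP.
  move=> E v; apply/implyP; rewrite Fix_asg negb_and negbK => hv.
  have ag : forall u, ~~ Lb H u -> w' u = w u by move=> u nu; rewrite -E Phi_nl.
  case Lv : (Lb H v); last by rewrite ag ?Lv.
  have Ev : w v = w' v || ~~ Kf H w v by rewrite -{1}E ffunE Lv (K_agree _ HH ag).
  case Kv : (Kf H w v); first by rewrite Ev Kv orbF.
  by move: hv; rewrite Ev Kv orbT.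
move=> hall.
have ag : forall u, ~~ Lb H u -> w' u = w u.
  move=> u nu; apply/eqP; apply: (implyP (hall u)); rewrite Fix_asg.
  by apply/negP=> /andP[_ /Lb_K]; apply/negP.
apply/ffunP=> v; rewrite ffunE (K_agree _ HH ag).
case Lv : (Lb H v); last by rewrite ag ?Lv.
case Fv : (v \in Fix H (asg w)).
  by move: Fv; rewrite Fix_asg => /andP[wv nK]; rewrite wv nK orbT.
have := implyP (hall v); rewrite Fv => /(_ isT) /eqP ->.
case Kv : (Kf H w v); first by rewrite orbF.
by rewrite orbT (SAT_nK Sw) ?Kv.
Qed.

Lemma card_agree (T : finType) (F : {set T}) (w : {ffun T -> bool}) :
  #|[set w' : {ffun T -> bool} | [forall v, (v \notin F) ==> (w' v == w v)]]| = 2 ^ #|F|.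
Proof.
rewrite -card_powerset.
pose g (A : {set T}) : {ffun T -> bool} := [ffun v => if v \in F then v \in A else w v].
have gi : {in powerset F &, injective g}.
  move=> A B; rewrite !inE => AF BF E; apply/setP=> v.
  have := congr1 (fun f : {ffun T -> bool} => f v) E; rewrite !ffunE.
  case vF : (v \in F) => //= _.
  apply/idP/idP => h; [by rewrite (subsetP AF) in vF | by rewrite (subsetP BF) in vF].
rewrite -(card_in_imset gi); apply: eq_card => w'; rewrite inE.
apply/forallP/imsetP.
  move=> h; exists [set v in F | w' v]; first by rewrite inE; apply/subsetP=> v; rewrite inE => /andP[].
  apply/ffunP=> v; rewrite !ffunE inE; case vF : (v \in F) => //=.
  by apply/eqP; apply: (implyP (h v)); rewrite vF.
move=> [A _ ->] v; apply/implyP=> vF; by rewrite ffunE (negbTE vF).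
Qed.

Lemma card_fiber (V : finType) (H : treeData V) (w : {ffun V -> bool}) :
  is_btbg H -> SAT H (asg w) ->
  #|[set w' | Phi H w' == w]| = 2 ^ #|Fix H (asg w)|.
Proof.
move=> HH Sw; rewrite -(card_agree _ w); apply: eq_card => w'; by rewrite !inE Phi_fiber.
Qed.

Local Open Scope ring_scope.

Definition cst (R : realFieldType) (V : finType) : R := (2^-1) ^+ #|V|.

Lemma cst_mul (R : realFieldType) (V : finType) : cst R V * (2 ^ #|V|)%:R = 1.
Proof.
by rewrite /cst natrX -exprMn mulVf ?expr1n // pnatr_eq0.
Qed.

Lemma prob_asg (R : realFieldType) (V : finType) (H : treeData V) (w : {ffun V -> bool}) :
  prob H R (asg w) = cst R V * (2 ^ #|Fix H (asg w)|)%:R.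
Proof.
rewrite /prob /cst.
have -> : [set v | v \notin Fix H (asg w)] = ~: Fix H (asg w) by apply/setP=> v; rewrite !inE.
rewrite -(cardsC (Fix H (asg w))) exprD natrX mulrAC -exprMn mulVf ?expr1n ?mul1r //.
by rewrite pnatr_eq0.
Qed.

Lemma Pr_count (R : realFieldType) (V : finType) (H : treeData V) (E : {set lit V} -> Prop) :
  is_btbg H ->
  Pr H R E = cst R V * #|[set w | `[< E (asg (Phi H w)) >]]|%:R.
Proof.
move=> HH; rewrite /Pr (reindex_onto (@asg V) (@unasg V)); last first.
  by move=> S /asboolP [SS _]; apply: (asg_unasg SS).
under eq_bigl => w do rewrite unasg_asg eqxx andbT.
under eq_bigr => w /asboolP [Sw _] do rewrite prob_asg -(card_fiber HH Sw).
rewrite -mulr_sumr -natr_sum; congr (_ * _%:R).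
apply/esym; rewrite -sum1_card (partition_big (Phi H) (fun w => `[< SAT H (asg w) /\ E (asg w) >])); last first.
  by move=> w'; rewrite inE => /asboolP Ew; apply/asboolP; split=> //; apply: SAT_Phi.
apply: eq_bigr => w /asboolP [Sw Ew]; rewrite -sum1_card; apply: eq_bigl => w'.
rewrite !inE; case: eqP => [->|]; rewrite ?andbF ?andbT //.
by apply/asboolP.
Qed.

Lemma cyl (V : finType) (H : treeData V) (S : {set lit V}) (w1 w2 : {ffun V -> bool}) :
  is_btbg H -> guarded H S -> (forall v, v \in lvars S -> w1 v = w2 v) ->
  S \subset asg (Phi H w1) -> S \subset asg (Phi H w2).
Proof.
move=> HH gS ag /subsetP sub; apply/subsetP=> [[v b]] vbS.
have inl : forall u c, (u, c) \in S -> u \in lvars S.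
  by move=> u [] h; rewrite inE h ?orbT.
have P1 : forall u c, (u, c) \in S -> Phi H w1 u = c.
  by move=> u c h; move: (sub _ h); rewrite in_asg => /eqP.
have w1nl : forall u c, (u, c) \in S -> ~~ Lb H u -> w1 u = c.
  by move=> u c h nu; rewrite -(Phi_nl w1 nu) (P1 _ _ h).
have eqX : forall i j : tidx H, clause_at i j v -> (Xc w1 i j v <-> Xc w2 i j v).
  move=> i j c; case: (gS i j v c) => [nocc|[[u [pu uv uS]]|[vS hall]]].
  - by exfalso; apply: nocc; case: b vbS => h; [left|right].
  - have nu := nonleaf HH c pu uv.
    have w1u := w1nl _ _ uS nu.
    have w2u : w2 u = true by rewrite -ag ?(inl _ _ uS).
    by split=> _; exists u; split.
  - split=> -[u [pu uv wu]]; exfalso; have uS := hall u pu uv;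
      have nu := nonleaf HH c pu uv; have w1u := w1nl _ _ uS nu.
      by rewrite w1u in wu.
    by move: wu; rewrite -(ag u (inl _ _ uS)) w1u.
have Keq : Kf H w2 v = Kf H w1 v.
  by apply: asbool_equiv_eq; split=> K i j c; apply/(eqX i j c); apply: K.
by rewrite in_asg -(P1 _ _ vbS) !ffunE (ag v (inl _ _ vbS)) Keq.
Qed.

Local Open Scope ring_scope.

Definition dep (V : finType) (R : Type) (f : {ffun V -> bool} -> R) (D : {set V}) :=
  forall w1 w2 : {ffun V -> bool}, (forall v, v \in D -> w1 v = w2 v) -> f w1 = f w2.

Lemma sum_const1 (R : realFieldType) (V : finType) (x : R) :
  \sum_(w : {ffun V -> bool}) x = (2 ^ #|V|)%:R * x.
Proof. by rewrite sumr_const card_ffun card_bool mulr_natl. Qed.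

Lemma indep2 (R : realFieldType) (V : finType) (D1 D2 : {set V})
  (f g : {ffun V -> bool} -> R) :
  [disjoint D1 & D2] -> dep f D1 -> dep g D2 ->
  (\sum_w f w) * (\sum_w g w) = (2 ^ #|V|)%:R * \sum_w f w * g w.
Proof.
move=> dis df dg.
pose mix (a b : {ffun V -> bool}) : {ffun V -> bool} :=
  [ffun v => if v \in D1 then a v else b v].
have mf : forall a b, f (mix a b) = f a by move=> a b; apply: df => v vD; rewrite ffunE vD.
have mg : forall a b, g (mix a b) = g b.
  by move=> a b; apply: dg => v vD; rewrite ffunE (disjointFl dis vD).
pose psi (p : {ffun V -> bool} * {ffun V -> bool}) := (mix p.1 p.2, mix p.2 p.1).
have psiK : involutive psi.
  move=> [a b]; congr pair; apply/ffunP=> v; rewrite !ffunE; by case: (v \in D1).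
rewrite mulr_suml; under eq_bigr do rewrite mulr_sumr.
rewrite pair_big /=.
transitivity (\sum_(p : {ffun V -> bool} * {ffun V -> bool}) f (psi p).1 * g (psi p).1).
  by apply: eq_bigr => [[a b]] _ /=; rewrite mf mg.
rewrite -(reindex_inj (inv_inj psiK) (F := fun p => f p.1 * g p.1) (P := xpredT)) /=.
rewrite -(pair_big xpredT xpredT (fun a b => f a * g a)) /= mulr_sumr.
by apply: eq_bigr => a _; rewrite sum_const1.
Qed.

Lemma indep_prod (R : realFieldType) (V : finType) (n : nat)
  (f : 'I_n -> {ffun V -> bool} -> R) (D : 'I_n -> {set V}) :
  (forall i k, i != k -> [disjoint D i & D k]) -> (forall i, dep (f i) (D i)) ->
  cst R V * \sum_w \prod_(i < n) f i w = \prod_(i < n) (cst R V * \sum_w f i w).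
Proof.
elim: n f D => [|n IH] f D dis df.
  under eq_bigr do rewrite big_ord0.
  by rewrite big_ord0 sum_const1 mulr1 cst_mul.
rewrite big_ord_recr /=; under eq_bigr do rewrite big_ord_recr /=.
rewrite -(IH (fun i => f (widen_ord (leqnSn n) i)) (fun i => D (widen_ord (leqnSn n) i))); last first.
- by move=> i; apply: df.
- by move=> i k ik; apply: dis; apply: contra ik => /eqP [] ik; apply/eqP/val_inj.
set G := fun w => \prod_(i < n) f (widen_ord (leqnSn n) i) w.
have -> : cst R V * (\sum_w G w) * (cst R V * \sum_w f ord_max w) =
   cst R V * cst R V * ((\sum_w G w) * (\sum_w f ord_max w)) by rewrite mulrACA.
rewrite (@indep2 R V (\bigcup_(i < n) D (widen_ord (leqnSn n) i)) (D ord_max)).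
- by rewrite -mulrA (mulrA (cst R V) (2 ^ #|V|)%:R) cst_mul mul1r.
- rewrite -setI_eq0; apply/eqP/setP=> v; rewrite !inE; apply/negP=> /andP[/bigcupP [i _ vi] vm].
  have : [disjoint D (widen_ord (leqnSn n) i) & D ord_max].
    apply: dis; apply/eqP=> /(congr1 val) /= ie.
    by have := ltn_ord i; rewrite ie ltnn.
  by move/disjointFr => /(_ _ vi); rewrite vm.
- move=> w1 w2 ag; rewrite /G; apply: eq_bigr => i _; apply: (df _) => v vD.
  by apply: ag; apply/bigcupP; exists i.
- exact: df.
Qed.

Lemma card_sum (R : realFieldType) (T : finType) (b : pred T) :
  (#|[set w | b w]|%:R : R) = \sum_w (b w)%:R.
Proof.
rewrite -sum1_card natr_sum big_mkcond; apply: eq_bigr => w _.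
by rewrite inE; case: (b w).
Qed.

Lemma prod_ind (R : realFieldType) (n : nat) (b : 'I_n -> bool) :
  (\prod_(i < n) (b i)%:R : R) = ([forall i, b i])%:R.
Proof.
case: (boolP [forall i, b i]) => [/forallP h|/forallPn [i nbi]].
  by rewrite big1 // => i _; rewrite h.
by rewrite (bigD1 i) //= (negbTE nbi) mul0r.
Qed.

Lemma depA (V : finType) (H : treeData V) (D : {set V}) (SS : {set {set lit V}}) :
  is_btbg H -> (forall S, S \in SS -> guarded H S /\ lvars S = D) ->
  forall w1 w2 : {ffun V -> bool}, (forall v, v \in D -> w1 v = w2 v) ->
  [exists S in SS, S \subset asg (Phi H w1)] -> [exists S in SS, S \subset asg (Phi H w2)].
Proof.
move=> HH hS w1 w2 ag /existsP [S /andP [SSi sub]]; apply/existsP; exists S.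
have [gS lS] := hS S SSi; rewrite SSi /=; apply: (cyl HH gS _ sub).
by move=> v; rewrite lS; apply: ag.
Qed.

Unset Implicit Arguments.

Theorem lemma18 (R : realFieldType) (V : finType) (H : treeData V)
  (HH : is_btbg H) (q : nat) (Vs : 'I_q -> {set V})
  (Ss : 'I_q -> {set {set lit V}}) :
  (forall i k, i != k -> [disjoint Vs i & Vs k]) ->
  (forall i S, S \in Ss i -> [/\ consistent S, guarded H S & lvars S = Vs i]) ->
  Pr H R (fun S' => forall i, exists2 S, S \in Ss i & EC H S S') =
  \prod_(i < q) Pr H R (fun S' => exists2 S, S \in Ss i & EC H S S').
Proof.
move=> dis hS.
pose A i (w : {ffun V -> bool}) := [exists S in Ss i, S \subset asg (Phi H w)].
have eqA : forall i w, `[< exists2 S, S \in Ss i & EC H S (asg (Phi H w)) >] = A i w.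
  move=> i w; apply/asboolP/existsP.
    by move=> [S SS [_ sub]]; exists S; rewrite SS.
  by move=> [S /andP [SS sub]]; exists S => //; split=> //; apply: SAT_Phi.
rewrite Pr_count //; under eq_bigr => i _ do rewrite Pr_count //.
have -> : #|[set w | `[< forall i, exists2 S, S \in Ss i & EC H S (asg (Phi H w)) >]]|
    = #|[set w | [forall i, A i w]]|.
  apply: eq_card => w; rewrite !inE; apply/asboolP/forallP => h i.
    by rewrite -eqA; apply/asboolP.
  by apply/asboolP; rewrite eqA.
have cA : forall i, #|[set w | `[< exists2 S, S \in Ss i & EC H S (asg (Phi H w)) >]]| = #|[set w | A i w]|.
  by move=> i; apply: eq_card => w; rewrite !inE eqA.
under eq_bigr => i _ do rewrite cA.
rewrite card_sum; under eq_bigr => i _ do rewrite card_sum.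
rewrite (eq_bigr (fun w : {ffun V -> bool} => \prod_(i < q) ((A i w)%:R : R))); last by move=> w _; rewrite prod_ind.
apply: (indep_prod (f := fun i w => (A i w)%:R) (D := Vs)) => // i w1 w2 ag.
have hS' : forall S, S \in Ss i -> guarded H S /\ lvars S = Vs i.
  by move=> S /hS [].
have -> : A i w1 = A i w2; last by [].
apply/idP/idP; apply: (depA HH hS') => v vD; first exact: ag.
by rewrite ag.
Qed.
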